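(* Let $\alpha\ge1$ and $\beta\ge1$. If $N\subseteq C$, then every outcome satisfying $\alpha$-proportional fairness also satisfies $(1+\alpha)$-individual fairness, and every outcome satisfying $\beta$-individual fairness also satisfies $2\beta$-proportional fairness. If $N=C$, then every outcome satisfying $\beta$-individual fairness also satisfies $(1+\beta)$-proportional fairness.
   Context: Let $(\mathcal X,d)$ be a metric space, $N=[n]$ a set of agents and $C$ a set of candidates located in $\mathcal X$, $k\in\mathbb N^+$; an outcome is $W\subseteq C$ with $|W|\le k$; $B(i,r)=\{x\in\mathcal X:d(i,x)\le r\}$; $d(i,W)=\min_{c\in W}d(i,c)$. $\alpha$-proportional fairness: there is no group $N'\subseteq N$ with $|N'|\ge n/k$ and candidate $c\in C\setminus W$ such that $\alpha\, d(i,c)<d(i,W)$ for all $i\in N'$. $\beta$-individual fairness (defined for instances with $N\subseteq C$): $d(i,W)\le\beta\, r(i)$ for all $i\in N$, where $r(i)=\min\{r\in\mathbb R: |B(i,r)\cap N|\ge n/k\}$. *)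

(* Defs.v *)
From mathcomp Require Import all_boot all_order all_algebra.
From mathcomp Require Import finmap.
Set Implicit Arguments. Unset Strict Implicit. Unset Printing Implicit Defensive.
Import Order.TTheory GRing.Theory Num.Theory.
Local Open Scope ring_scope.
Local Open Scope fset_scope.

Section Fairness.
Variables (R : realFieldType) (X : choiceType) (d : X -> X -> R).

Definition is_metric : Prop :=
  [/\ forall x y, d x y = 0 <-> x = y,
      forall x y, d x y = d y x &
      forall x y z, d x z <= (d x y + d y z)%R].

(* alpha-proportional fairness of outcome W, for agents N, candidates C, parameter k.
   d(i,W) = min_{w in W} d i w, so  a*d(i,c) < d(i,W)  iff  a*d(i,c) < d i w for all w in W. *)
Definition prop_fair (N C : {fset X}) (k : nat) (alpha : R) (W : {fset X}) : Prop :=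
  ~ exists (N' : {fset X}) (c : X),
      [/\ N' `<=` N,
          (#|` N'|%:R >= #|` N|%:R / k%:R :> R),
          c \in C `\` W &
          forall i, i \in N' -> forall w, w \in W -> alpha * d i c < d i w].

Definition ball_count (N : {fset X}) (i : X) (r : R) : nat :=
  #|` [fset j in N | d i j <= r]|.

Definition is_radius (N : {fset X}) (k : nat) (i : X) (r : R) : Prop :=
  (ball_count N i r)%:R >= #|` N|%:R / k%:R :> R /\
  forall r', (ball_count N i r')%:R >= #|` N|%:R / k%:R :> R -> r <= r'.

Definition indiv_fair (N : {fset X}) (k : nat) (beta : R) (W : {fset X}) : Prop :=
  forall i, i \in N -> forall r, is_radius N k i r ->
    exists2 w, w \in W & d i w <= beta * r.

Definition outcome (C : {fset X}) (k : nat) (W : {fset X}) : Prop :=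
  W `<=` C /\ (#|` W| <= k)%N.

End Fairness.

(* Main.v *)
Require Import Defs.
From mathcomp Require Import all_boot all_order all_algebra.
From mathcomp Require Import finmap.
From mathcomp Require Import lra.
From Stdlib Require Import Classical.
Import Order.TTheory GRing.Theory Num.Theory.
Set Implicit Arguments. Unset Strict Implicit.
Local Open Scope ring_scope.
Local Open Scope fset_scope.

Lemma seq_argmax (R : realFieldType) (X : choiceType) (f : X -> R) (s : seq X) :
  s != [::] -> exists2 j, j \in s & forall j', j' \in s -> f j' <= f j.
Proof.
elim: s => [//|a s IH] _.
case: s IH => [|b s] IH.
  by exists a; rewrite ?inE // => j'; rewrite inE => /eqP->.
have [j js Hj] := IH isT.
case: (lerP (f a) (f j)) => h.
  exists j; first by rewrite inE js orbT.
  by move=> j'; rewrite inE => /orP[/eqP->|/Hj].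
exists a; first by rewrite inE eqxx.
move=> j'; rewrite inE => /orP[/eqP->//|/Hj h']; exact: (le_trans h' (ltW h)).
Qed.

Lemma fset_argmax (R : realFieldType) (X : choiceType) (f : X -> R) (A : {fset X}) :
  A != fset0 -> exists2 j, j \in A & forall j', j' \in A -> f j' <= f j.
Proof.
move=> hA; apply: (@seq_argmax R X f (A : seq X)).
case/fset0Pn: hA => x hx; apply/eqP => e.
by move: hx; rewrite -[x \in A]/(x \in (A : seq X)) e.
Qed.

Section Aux.
Variables (R : realFieldType) (X : choiceType) (d : X -> X -> R).
Hypothesis hd : is_metric d.

Lemma d0 x : d x x = 0. Proof. by case: hd => h _ _; apply/h. Qed.
Lemma dsym x y : d x y = d y x. Proof. by case: hd. Qed.
Lemma dtri x y z : d x z <= (d x y + d y z)%R. Proof. by case: hd. Qed.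
Lemma dge0 x y : 0 <= d x y.
Proof. have := dtri x y x; rewrite d0 (dsym y x); lra. Qed.

Lemma bc_mono (N A : {fset X}) i r :
  A `<=` N -> (forall j, j \in A -> d i j <= r) -> (#|` A| <= ball_count d N i r)%N.
Proof.
move=> hAN hA; apply: fsubset_leq_card; apply/fsubsetP => j hj.
by rewrite !inE (fsubsetP hAN _ hj) /= hA.
Qed.

Lemma thr_pos (N : {fset X}) (k : nat) : N != fset0 -> (0 < k)%N ->
  0 < #|` N|%:R / k%:R :> R.
Proof.
move=> hN hk; apply: divr_gt0; rewrite ltr0n //.
by rewrite cardfs_gt0.
Qed.

Lemma ball_nonempty (N : {fset X}) (k : nat) i r : N != fset0 -> (0 < k)%N ->
  (ball_count d N i r)%:R >= #|` N|%:R / k%:R :> R ->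
  [fset j in N | d i j <= r] != fset0.
Proof.
move=> hN hk h; rewrite -cardfs_gt0 -(ltr0n R).
move: h; rewrite /ball_count => h; exact: (lt_le_trans (thr_pos hN hk) h).
Qed.

Lemma radius_exists (N : {fset X}) (k : nat) i : N != fset0 -> (0 < k)%N ->
  exists r, is_radius d N k i r.
Proof.
move=> hN hk.
set thr := #|` N|%:R / k%:R : R.
pose S := [fset j in N | thr <= (ball_count d N i (d i j))%:R].
have hS : S != fset0.
  have [j jN Hj] := fset_argmax (d i) hN.
  apply/fset0Pn; exists j; rewrite !inE jN /=.
  have h1 : (#|` N| <= ball_count d N i (d i j))%N by apply: bc_mono.
  have h2 : (#|` N|%:R : R) <= (ball_count d N i (d i j))%:R by rewrite ler_nat.
  apply: le_trans h2.
  rewrite /thr ler_pdivrMr ?ltr0n // ler_peMr // ?ler1n //.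
have [j jS Hj] := fset_argmax (fun x => - d i x) hS.
move: (jS); rewrite !inE => /andP[jN hj].
exists (d i j); split => // r' hr'.
have [j2 j2B Hj2] := fset_argmax (d i) (ball_nonempty hN hk hr').
move: (j2B); rewrite !inE => /andP[j2N hj2].
have : j2 \in S.
  rewrite !inE j2N /=; apply: (le_trans hr'); rewrite ler_nat; apply: bc_mono.
    by apply/fsubsetP => x; rewrite !inE => /andP[].
  by move=> x xB; apply: Hj2.
move/Hj => h; apply: (le_trans _ hj2); lra.
Qed.

End Aux.

Theorem theorem1 (R : realFieldType) (X : choiceType) (d : X -> X -> R)
  (N C : {fset X}) (k : nat) (alpha beta : R) :
  is_metric d -> N != fset0 -> (0 < k)%N -> 1 <= alpha -> 1 <= beta ->
  (N `<=` C ->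
     (forall W, outcome C k W -> prop_fair d N C k alpha W ->
                indiv_fair d N k (1 + alpha)%R W) /\
     (forall W, outcome C k W -> indiv_fair d N k beta W ->
                prop_fair d N C k (2 * beta) W)) /\
  (N = C ->
     forall W, outcome C k W -> indiv_fair d N k beta W ->
               prop_fair d N C k (1 + beta)%R W).
Proof.
move=> hd hN hk ha hb; split; first split.
- move=> W _ Hpf i iN r [hr hmin].
  case: (classic (exists2 w, w \in W & d i w <= (1 + alpha) * r)) => // nex.
  have Hw : forall w, w \in W -> (1 + alpha) * r < d i w.
    move=> w wW; rewrite ltNge; apply/negP => h; apply: nex; by exists w.
  have r0 : 0 <= r.
    case/fset0Pn: (ball_nonempty hN hk hr) => j; rewrite !inE => /andP[_ h].
    exact: le_trans (dge0 hd i j) h.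
  exfalso; apply: Hpf; exists [fset j in N | d i j <= r], i; split => //.
  + by apply/fsubsetP => x; rewrite !inE => /andP[].
  + rewrite in_fsetD (fsubsetP H _ iN) andbT; apply/negP => iW.
    have := Hw _ iW; rewrite d0 //; nra.
  + move=> j; rewrite !inE => /andP[_ hj] w wW.
    have := Hw _ wW; have := dtri hd i j w; rewrite (dsym hd j i).
    have : alpha * d i j <= alpha * r by apply: ler_wpM2l => //; lra.
    lra.
- move=> W _ Hind [N' [c [hN'N hcard hc Hall]]].
  have hN' : N' != fset0.
    rewrite -cardfs_gt0 -(ltr0n R); exact: (lt_le_trans (@thr_pos R X N k hN hk) hcard).
  have [i iN' Hi] := fset_argmax (fun x => d x c) hN'.
  have iN := fsubsetP hN'N _ iN'.
  have [r [hr hmin]] := radius_exists d i hN hk.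
  have r2 : r <= 2 * d i c.
    apply: hmin; apply: (le_trans hcard); rewrite ler_nat; apply: bc_mono => //.
    move=> j jN'; have := Hi _ jN'; have := dtri hd i c j; rewrite (dsym hd c j); lra.
  have [w wW hw] := Hind i iN r (conj hr hmin).
  have := Hall i iN' w wW.
  have : beta * r <= beta * (2 * d i c) by apply: ler_wpM2l => //; lra.
  lra.
- move=> eNC W _ Hind [N' [c [hN'N hcard hc Hall]]].
  subst C.
  have hN' : N' != fset0.
    rewrite -cardfs_gt0 -(ltr0n R); exact: (lt_le_trans (@thr_pos R X N k hN hk) hcard).
  have cN : c \in N by move: hc; rewrite in_fsetD => /andP[].
  have [i iN' Hi] := fset_argmax (fun x => d c x) hN'.
  have [r [hr hmin]] := radius_exists d c hN hk.
  have r2 : r <= d c i.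
    apply: hmin; apply: (le_trans hcard); rewrite ler_nat; apply: bc_mono => //.
  have [w wW hw] := Hind c cN r (conj hr hmin).
  have := Hall i iN' w wW.
  have : beta * r <= beta * d c i by apply: ler_wpM2l => //; lra.
  have := dtri hd i c w; rewrite (dsym hd i c).
  lra.
Qed.
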